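(* Let $V$ be a vector configuration of rank $r$. For every $s$ with $1\le s\le r-1$ there exists a subconfiguration $W\subseteq V$ of rank $s$ such that $\mathrm{DD}(V)=\mathrm{DD}(W)+\mathrm{DD}(V/W)$.
   Context: A vector configuration is a finite family (repetitions allowed) $U$ of vectors in a real vector space $E$; a subconfiguration is a subfamily, $\operatorname{rank}(U)=\dim\operatorname{lin}(U)$, cardinalities count multiplicities. The quotient $V/W$ is the configuration in $E/\operatorname{lin}(W)$ of the images of the elements of $V\setminus W$. Covector discrepancy: $\mathrm{DD}(U)=\max_f\big|\,|\{u\in U: f(u)>0\}|-|\{u\in U:f(u)<0\}|\,\big|$ over all linear functionals $f$ on $E$. *)

(* Defs.v *)
From HB Require Import structures.
From mathcomp Require Import all_boot all_order all_algebra.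
From mathcomp Require Import boolp reals.
Set Implicit Arguments. Unset Strict Implicit. Unset Printing Implicit Defensive.
Import Order.TTheory GRing.Theory Num.Theory.
Local Open Scope ring_scope.

(* A vector configuration is a family [U : J -> 'rV[R]_m] indexed by a finite
   type [J] (repetitions allowed); a subconfiguration is given by a subset
   [A : {set J}] of indices.  Linear functionals on 'rV_m are [u |-> (u *m c) 0 0]
   for column vectors [c]. *)

Section Config.
Variable R : realType.

Definition disc (m : nat) (J : finType) (A : {set J}) (U : J -> 'rV[R]_m)
  (c : 'cV[R]_m) : nat :=
  let npos := #|[set j in A | 0 < (U j *m c) ord0 ord0]| in
  let nneg := #|[set j in A | (U j *m c) ord0 ord0 < 0]| in
  `|npos - nneg|%N.

(* covector discrepancy: the maximum of [disc] over all linear functionals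
   (the values are bounded by #|J|, so this max over a finite range is the max). *)
Definition DD (m : nat) (J : finType) (A : {set J}) (U : J -> 'rV[R]_m) : nat :=
  (\max_(k < #|J|.+1 | `[< exists c : 'cV[R]_m, disc A U c = k >]) k)%N.

Definition crank (m : nat) (J : finType) (A : {set J}) (U : J -> 'rV[R]_m) : nat :=
  \rank (\sum_(j in A) <<U j>>)%MS.

(* The quotient V/W, W = (V j)_{j in S}: the images of V j, j notin S, under the
   linear map u |-> u *m cokermx (lin W), whose kernel is exactly lin(W)
   (submxE); its image is thus isomorphic to E / lin(W). *)
Definition quotmap (m : nat) (J : finType) (S : {set J}) (U : J -> 'rV[R]_m)
  : J -> 'rV[R]_m :=
  fun j => U j *m cokermx (\sum_(i in S) <<U i>>)%MS.

End Config.

(* Main.v *)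
Require Import Defs.
From HB Require Import structures.
From mathcomp Require Import all_boot all_order all_algebra.
From mathcomp Require Import boolp reals.
From mathcomp Require Import zify ring lra.
Set Implicit Arguments. Unset Strict Implicit. Unset Printing Implicit Defensive.
Import Order.TTheory GRing.Theory Num.Theory.
Local Open Scope ring_scope.

Section Work.
Variables (R : realType) (n : nat) (I : finType) (V : I -> 'rV[R]_n).

Definition vv (j : I) (c : 'cV[R]_n) : R := (V j *m c) ord0 ord0.
Definition vanish (Z : {set I}) (c : 'cV[R]_n) := forall j, j \in Z -> vv j c = 0.
Definition sig (A : {set I}) (c : 'cV[R]_n) : int := \sum_(j in A) sgz (vv j c).
Definition span (A : {set I}) : 'M[R]_n := (\sum_(j in A) <<V j>>)%MS.

Lemma vvD j c d : vv j (c + d) = vv j c + vv j d.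
Proof. by rewrite /vv mulmxDr mxE. Qed.
Lemma vvZ j (a : R) c : vv j (a *: c) = a * vv j c.
Proof. by rewrite /vv -scalemxAr mxE. Qed.
Lemma vvN j c : vv j (- c) = - vv j c.
Proof. by rewrite /vv mulmxN mxE. Qed.

Lemma card_sum (A : {set I}) (b : I -> bool) :
  (#|[set j in A | b j]|%:Z) = \sum_(j in A) ((b j : nat)%:Z).
Proof.
rewrite -sum1_card (big_morph Posz PoszD (erefl _)).
rewrite [RHS]big_mkcond [LHS]big_mkcond; apply: eq_bigr => j _.
by rewrite !inE; case: (j \in A); case: (b j).
Qed.

Lemma disc_sig (A : {set I}) c : disc A V c = `|sig A c|%N.
Proof.
rewrite /disc /sig; congr absz.
rewrite !card_sum -sumrB; apply: eq_bigr => j _.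
rewrite -/(vv j c); case: (ltrgtP (vv j c) 0) => h /=.
- by rewrite ltr0_sgz // (lt_geF h).
- by rewrite gtr0_sgz // (lt_geF h).
- by rewrite h sgz0 ?ltxx ?subrr.
Qed.

Lemma sig_split (A Y : {set I}) c : Y \subset A ->
  sig A c = sig Y c + sig (A :\: Y) c.
Proof. by move=> YA; rewrite /sig (big_setID Y) /= (setIidPr YA). Qed.

Lemma sig_vanish (Y : {set I}) c : vanish Y c -> sig Y c = 0.
Proof. by move=> h; rewrite /sig big1 // => j /h ->; rewrite sgz0. Qed.

Lemma sig_opp (A : {set I}) c : sig A (- c) = - sig A c.
Proof. by rewrite /sig -sumrN; apply: eq_bigr => j _; rewrite vvN sgzN. Qed.

Lemma sig_eq (A : {set I}) c d : (forall j, j \in A -> sgz (vv j c) = sgz (vv j d)) ->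
  sig A c = sig A d.
Proof. by move=> h; apply: eq_bigr. Qed.

Lemma span_sub (A B : {set I}) : A \subset B -> (span A <= span B)%MS.
Proof.
move=> AB; apply/sumsmx_subP => j jA.
by apply: (sumsmx_sup j) => //; apply: (subsetP AB).
Qed.

Lemma V_span (A : {set I}) j : j \in A -> (V j <= span A)%MS.
Proof. by move=> jA; apply: (sumsmx_sup j) => //; rewrite genmxE. Qed.

Lemma vv0 j c : vv j c = 0 -> V j *m c = 0.
Proof. by move=> h; apply/matrixP => a b; rewrite !ord1 [RHS]mxE; exact: h. Qed.

Lemma vanish_span (Y : {set I}) c m (u : 'M[R]_(m, n)) : vanish Y c -> (u <= span Y)%MS -> u *m c = 0.
Proof.
move=> h uY; apply/eqP; rewrite -sub_kermx; apply: (submx_trans uY).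
apply/sumsmx_subP => j jY; rewrite genmxE sub_kermx; apply/eqP.
exact: (vv0 (h j jY)).
Qed.

Lemma sep (S : 'M[R]_n) (u : 'rV[R]_n) : ~~ (u <= S)%MS ->
  exists c : 'cV[R]_n, S *m c = 0 /\ (u *m c) ord0 ord0 != 0.
Proof.
rewrite submxE => hu.
have [k hk] : exists k, (u *m cokermx S) ord0 k != 0.
  apply/existsP; move: hu; apply: contraR; rewrite negb_exists => /forallP h.
  apply/eqP/matrixP => a b; rewrite !ord1 [RHS]mxE; apply/eqP; move: (h b); rewrite ord1; exact: negbNE.
exists (cokermx S *m delta_mx k 0); split.
  by rewrite mulmxA mulmx_coker mul0mx.
by rewrite mulmxA -colE mxE.
Qed.

Lemma sep_span (Y : {set I}) (u : 'rV[R]_n) : ~~ (u <= span Y)%MS ->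
  exists c, vanish Y c /\ (u *m c) ord0 ord0 != 0.
Proof.
move=> /sep [c [h1 h2]]; exists c; split=> // j jY.
rewrite /vv; have /submxP [x ->] := V_span jY.
by rewrite -mulmxA h1 mulmx0 mxE.
Qed.


Definition FF (A Z : {set I}) : nat :=
  (\max_(k < #|I|.+1 | `[< exists c, vanish Z c /\ disc A V c = k >]) k)%N.

Lemma disc_le (A : {set I}) c : (disc A V c <= #|I|)%N.
Proof.
rewrite /disc.
set a := #|_|; set b := #|_|.
have ha : (a <= #|I|)%N by apply: max_card.
have hb : (b <= #|I|)%N by apply: max_card.
lia.
Qed.

Lemma FF_ub (A Z : {set I}) c : vanish Z c -> (disc A V c <= FF A Z)%N.
Proof.
move=> hc; rewrite /FF.
have hlt : (disc A V c < #|I|.+1)%N by rewrite ltnS disc_le.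
apply: (@leq_bigmax_cond _ _ (fun k : 'I_#|I|.+1 => (k : nat)) (Ordinal hlt)).
by apply/asboolP; exists c.
Qed.

Lemma FF_ex (A Z : {set I}) : exists c, vanish Z c /\ disc A V c = FF A Z.
Proof.
rewrite /FF.
have hlt : (0 < #|I|.+1)%N by [].
have hne : (0 < #|[pred k : 'I_#|I|.+1 | `[< exists c, vanish Z c /\ disc A V c = k >]]|)%N.
  apply/card_gt0P; exists (Ordinal hlt); rewrite inE; apply/asboolP.
  exists 0; split; first by move=> j _; rewrite /vv mulmx0 mxE.
  by rewrite disc_sig /sig big1 // => j _; rewrite /vv mulmx0 mxE sgz0.
have [k0 + ->] := eq_bigmax_cond (fun k : 'I_#|I|.+1 => (k : nat)) hne.
by rewrite inE => /asboolP.
Qed.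

Lemma maxspec (N m : nat) (P : nat -> Prop) : P m -> (m <= N)%N ->
  (forall k, P k -> (k <= m)%N) -> (\max_(k < N.+1 | `[< P k >]) k)%N = m.
Proof.
move=> Pm mN hk; apply/eqP; rewrite eqn_leq; apply/andP; split.
  by apply/bigmax_leqP => k /asboolP /hk.
have hlt : (m < N.+1)%N by rewrite ltnS.
apply: (@leq_bigmax_cond _ _ (fun k : 'I_N.+1 => (k : nat)) (Ordinal hlt)).
exact/asboolP.
Qed.

Lemma FF_le (A Z : {set I}) : (FF A Z <= #|I|)%N.
Proof. have [c [_ <-]] := FF_ex A Z; exact: disc_le. Qed.

Lemma DD_FF (A : {set I}) : DD A V = FF A set0.
Proof.
rewrite /DD; apply: (@maxspec _ _ (fun k => exists c, disc A V c = k)); last first.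
- by move=> k [c <-]; apply: FF_ub => j; rewrite inE.
- exact: FF_le.
- by have [c [_ <-]] := FF_ex A set0; exists c.
Qed.


Lemma disc_eq m (A : {set I}) (U U' : I -> 'rV[R]_m) c c' :
  (forall j, j \in A -> (U j *m c) ord0 ord0 = (U' j *m c') ord0 ord0) ->
  disc A U c = disc A U' c'.
Proof.
move=> h; rewrite /disc; congr (absz (Posz _ - Posz _)); apply: eq_card => j;
  rewrite !inE; case jA: (j \in A) => //=; by rewrite h.
Qed.

Lemma disc_compl (W : {set I}) c : vanish W c -> disc setT V c = disc (~: W) V c.
Proof.
move=> h; rewrite !disc_sig (sig_split c (subsetT W)) sig_vanish // add0r.
by rewrite setTD.
Qed.

Lemma quot_FF (W : {set I}) : DD (~: W) (quotmap W V) = FF setT W.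
Proof.
rewrite /DD; apply: (@maxspec _ _ (fun k => exists c, disc (~: W) (quotmap W V) c = k)).
- have [c' [hc' <-]] := FF_ex setT W.
  exists (row_ebase (span W) *m c').
  rewrite (disc_compl hc'); apply: disc_eq => j _.
  rewrite /quotmap -/(span W) mulmxA -[V j *m _ *m _]mulmxA.
  rewrite /cokermx /copid_mx mulmxBr mulmx1 mulmxBl mulVmx ?row_ebase_unit //.
  have hrb : (pid_mx (\rank (span W)) : 'M[R]_n) *m (row_ebase (span W) *m c') = 0.
    rewrite -(@pid_mx_id _ n _ n _ (leqnn (\rank (span W)))) -mulmxA.
    rewrite (mulmxA (pid_mx _) (row_ebase _)) -/(row_base (span W)).
    have -> : row_base (span W) *m c' = 0.
      apply: (vanish_span hc'); by rewrite eq_row_base submx_refl.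
    by rewrite mulmx0.
  by rewrite mulmxBr mulmx1 mulmxBl -!mulmxA hrb !mulmx0 subr0.
- exact: FF_le.
- move=> k [c <-].
  have hv : vanish W (cokermx (span W) *m c).
    move=> j jW; rewrite /vv mulmxA.
    have /eqP -> : V j *m cokermx (span W) == 0 by rewrite -submxE V_span.
    by rewrite mul0mx mxE.
  have -> : disc (~: W) (quotmap W V) c = disc (~: W) V (cokermx (span W) *m c).
    by apply: disc_eq => j _; rewrite /quotmap -mulmxA.
  by move: (FF_ub setT hv); rewrite (disc_compl hv).
Qed.


Lemma sgz_small (a x : R) : `|x| < `|a| -> sgz (a + x) = sgz a.
Proof.
have h1 := ler_norm x.
have h3 : - x <= `|x| by rewrite -normrN ler_norm.
move=> hx; case: (ltrgtP a 0) => ha.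
- rewrite (ltr0_norm ha) in hx.
  have hax : a + x < 0 by lra.
  by rewrite !ltr0_sgz.
- rewrite (gtr0_norm ha) in hx.
  have hax : 0 < a + x by lra.
  by rewrite !gtr0_sgz.
- by move: hx; rewrite ha normr0 ltNge normr_ge0.
Qed.

Lemma eps (A : {set I}) g h : exists e : R, 0 < e /\
  forall j, j \in A -> vv j g != 0 ->
    sgz (vv j (g + e *: h)) = sgz (vv j g) /\ sgz (vv j (g - e *: h)) = sgz (vv j g).
Proof.
set S := \sum_(j in A) `|vv j h| / `|vv j g|.
have S0 : 0 <= S by apply: sumr_ge0 => j _; apply: divr_ge0.
have S1 : 0 < 1 + S by lra.
exists (1 + S)^-1; split; first by rewrite invr_gt0.
move=> j jA gj0.
have hb : `|vv j h| / `|vv j g| <= S.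
  rewrite /S (bigD1 j) //= lerDl; apply: sumr_ge0 => i _; by rewrite divr_ge0.
have ha : 0 < `|vv j g| by rewrite normr_gt0.
have key : `|(1 + S)^-1 * vv j h| < `|vv j g|.
  rewrite normrM ger0_norm ?invr_ge0 ?ltW // mulrC ltr_pdivrMr //.
  rewrite ler_pdivrMr // in hb.
  have : 0 <= `|vv j h| by []. nra.
split.
- by rewrite vvD vvZ sgz_small.
- rewrite -scaleNr vvD vvZ sgz_small // mulNr normrN //.
Qed.

Lemma two_sig (a b c : int) : a + b = c *+ 2 -> (`|c| <= `|a|)%N \/ (`|c| <= `|b|)%N.
Proof. move=> h. lia. Qed.


Definition flat (A Y : {set I}) :=
  forall j, j \in A -> j \notin Y -> ~~ (V j <= span Y)%MS.

Lemma vvB j c d : vv j (c - d) = vv j c - vv j d.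
Proof. by rewrite vvD vvN. Qed.

Lemma zrem (A Y : {set I}) g : flat A Y -> vanish Y g ->
  exists g', vanish Y g' /\ (`|sig A g| <= `|sig A g'|)%N /\
    forall j, j \in A -> j \notin Y -> vv j g' != 0.
Proof.
move=> fl.
move: {2}#|[set j in A :\: Y | vv j g == 0]| (leqnn #|[set j in A :\: Y | vv j g == 0]|) => m.
elim: m g => [|m IH] g hm vg.
  exists g; split => //; split => // j jA jY; apply/negP => /eqP h0.
  have : j \in [set j in A :\: Y | vv j g == 0] by rewrite !inE jA jY h0 eqxx.
  by move: hm; rewrite leqn0 cards_eq0 => /eqP ->; rewrite inE.
case: (eqVneq [set j in A :\: Y | vv j g == 0] set0) => [Z0|/set0Pn [j0]].
  exists g; split => //; split => // j jA jY; apply/negP => /eqP h0.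
  have : j \in [set j in A :\: Y | vv j g == 0] by rewrite !inE jA jY h0 eqxx.
  by rewrite Z0 inE.
rewrite !inE => /andP [/andP [jY0 jA0] /eqP gj0].
have [k [vk k0]] := sep_span (fl j0 jA0 jY0).
have {}k0 : vv j0 k != 0 by [].
have [e [e0 he]] := eps A g k.
have hsum : sig A (g + e *: k) + sig A (g - e *: k) = sig A g *+ 2.
  rewrite /sig -big_split -sumrMnl; apply: eq_bigr => j jA /=.
  case: (eqVneq (vv j g) 0) => gj.
    by rewrite vvB vvD !vvZ gj add0r add0r sgzN subrr sgz0 mul0rn.
  by have [-> ->] := he j jA gj; rewrite mulr2n.
have main : forall c, (c = g + e *: k \/ c = g - e *: k) ->
    (`|sig A g| <= `|sig A c|)%N ->
    exists g', vanish Y g' /\ (`|sig A g| <= `|sig A g'|)%N /\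
      forall j, j \in A -> j \notin Y -> vv j g' != 0.
  move=> c hc hle.
  have vc : vanish Y c.
    by move=> j jY; case: hc => ->; rewrite ?vvB ?vvD vvZ vg // vk // mulr0 ?subr0 ?addr0.
  have cj : forall j, j \in A -> vv j g != 0 -> sgz (vv j c) = sgz (vv j g).
    by move=> j jA gj; have [h1 h2] := he j jA gj; case: hc => ->.
  have c0 : vv j0 c != 0.
    case: hc => ->; rewrite ?vvB ?vvD vvZ gj0 ?add0r ?sub0r ?oppr_eq0;
      by rewrite mulf_neq0 // gt_eqF.
  have sub : [set j in A :\: Y | vv j c == 0] \subset [set j in A :\: Y | vv j g == 0] :\ j0.
    apply/subsetP => j; rewrite !inE => /andP [/andP [jY jA] /eqP hcj].
    rewrite jY jA /=; apply/andP; split.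
      by apply: contraNneq c0 => <-; rewrite hcj.
    case: (eqVneq (vv j g) 0) => // gj.
    by have := cj j jA gj; rewrite hcj sgz0 => /esym /eqP; rewrite sgz_eq0 (negbTE gj).
  have hcard : (#|[set j in A :\: Y | vv j c == 0%R]| <= m)%N.
    apply: (leq_trans (subset_leq_card sub)).
    move: hm; rewrite (cardsD1 j0 [set j in A :\: Y | vv j g == 0]) !inE jY0 jA0 gj0 eqxx /=.
    by rewrite add1n ltnS.
  have [g' [vg' [hle' hnz]]] := IH c hcard vc.
  by exists g'; split => //; split => //; apply: leq_trans hle hle'.
case: (two_sig hsum) => hle.
  by apply: (main (g + e *: k)) => //; left.
by apply: (main (g - e *: k)) => //; right.
Qed.


Lemma flip (B : {set I}) c : exists c', (c' = c \/ c' = - c) /\ sig B c' = `|sig B c|%:Z.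
Proof.
case: (lerP 0 (sig B c)) => h.
  by exists c; split; [left | rewrite abszE ger0_norm].
by exists (- c); split; [right | rewrite sig_opp abszE ltr0_norm].
Qed.

Lemma vanish_opp (Y : {set I}) c : vanish Y c -> vanish Y (- c).
Proof. by move=> h j jY; rewrite vvN h // oppr0. Qed.

Lemma lower (A Y Z : {set I}) : Z \subset Y -> Y \subset A -> flat A Y ->
  (FF Y Z + FF A Y <= FF A Z)%N.
Proof.
move=> ZY YA fl.
have [g [vg dg]] := FF_ex A Y.
have [g' [vg' [hle hnz]]] := zrem fl vg.
have [h [vh dh]] := FF_ex Y Z.
have [g1 [hg1 sg1]] := flip (A :\: Y) g'.
have [h1 [hh1 sh1]] := flip Y h.
have vg1 : vanish Y g1 by case: hg1 => ->; [|apply: vanish_opp].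
have vh1 : vanish Z h1 by case: hh1 => ->; [|apply: vanish_opp].
have nz1 : forall j, j \in A -> j \notin Y -> vv j g1 != 0.
  by move=> j jA jY; case: hg1 => ->; rewrite ?vvN ?oppr_eq0 hnz.
have [e [e0 he]] := eps A g1 h1.
set c := g1 + e *: h1.
have vc : vanish Z c.
  by move=> j jZ; rewrite /c vvD vvZ vh1 // vg1 ?(subsetP ZY) // mulr0 addr0.
have sY : sig Y c = sig Y h1.
  by apply: sig_eq => j jY; rewrite /c vvD vvZ vg1 // add0r sgzM gtr0_sgz // mul1r.
have sAY : sig (A :\: Y) c = sig (A :\: Y) g1.
  apply: sig_eq => j; rewrite inE => /andP [jY jA].
  by have [-> _] := he j jA (nz1 j jA jY).
have sA : sig A c = (`|sig Y h| + `|sig (A :\: Y) g'|)%N.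
  by rewrite (sig_split c YA) sY sAY sh1 sg1.
have dA : disc A V c = (disc Y V h + `|sig A g'|)%N.
  rewrite disc_sig sA disc_sig.
  by rewrite (sig_split g' YA) (sig_vanish vg') add0r.
rewrite -dh -dg.
apply: (leq_trans _ (FF_ub A vc)); rewrite dA leq_add2l.
by rewrite disc_sig.
Qed.


Lemma step_sign (a b t : R) : 0 < t -> (a = 0 -> b = 0) ->
  (a * b < 0 -> t * `|b| <= `|a|) ->
  (0 < a + t * b -> 0 < a) /\ (a + t * b < 0 -> a < 0).
Proof.
move=> t0 hab hm.
case: (ltrgtP a 0) => ha; case: (ltrgtP b 0) => hb.
- split; nra.
- have h0 : a * b < 0 by nra.
  have := hm h0; rewrite (ltr0_norm ha) (gtr0_norm hb) => h. split; nra.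
- split; nra.
- have h0 : a * b < 0 by nra.
  have := hm h0; rewrite (gtr0_norm ha) (ltr0_norm hb) => h. split; nra.
- split; nra.
- split; nra.
- by move: (hab ha); move/eqP; rewrite lt_eqF.
- by move: (hab ha); move/eqP; rewrite gt_eqF.
- rewrite ha hb; split; nra.
Qed.

Lemma cross0 (a b : R) : a * b < 0 -> a + `|a| / `|b| * b = 0.
Proof.
move=> hab; have b0 : b != 0 by apply: contraTneq hab => ->; rewrite mulr0 ltxx.
case: (ltrgtP a 0) => ha.
- have hb : 0 < b by nra.
  rewrite (ltr0_norm ha) (gtr0_norm hb). field. done.
- have hb : b < 0 by nra.
  rewrite (gtr0_norm ha) (ltr0_norm hb). field. done.
- by move: hab; rewrite ha mul0r ltxx.
Qed.


Definition KK (A : {set I}) g := [set j in A | vv j g == 0].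

Lemma vanish_KK (A : {set I}) g : vanish (KK A g) g.
Proof. by move=> j; rewrite inE => /andP [_ /eqP]. Qed.

Lemma KK_sub (A : {set I}) g : KK A g \subset A.
Proof. by apply/subsetP => j; rewrite inE => /andP []. Qed.

Lemma vv_span (Y : {set I}) c j : vanish Y c -> (V j <= span Y)%MS -> vv j c = 0.
Proof. by move=> h hj; rewrite /vv (vanish_span h hj) mxE. Qed.

Lemma rank_KK (A : {set I}) g : (exists2 j, j \in A & vv j g != 0) ->
  (\rank (span (KK A g)) < \rank (span A))%N.
Proof.
case=> j jA gj; apply: rank_ltmx; rewrite ltmxE span_sub ?KK_sub //=.
apply/negP => hs; move: gj; rewrite (vv_span (@vanish_KK A g)) ?eqxx //.
exact: submx_trans (V_span jA) hs.
Qed.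

Definition compat (A : {set I}) g' g :=
  (forall j, j \in A -> 0 < vv j g' -> 0 < vv j g) /\
  (forall j, j \in A -> vv j g' < 0 -> vv j g < 0).

Lemma natstep (a b c m : nat) : (a - b <= m.+1)%N -> (b < c)%N -> (a - c <= m)%N.
Proof. lia. Qed.

Lemma walk (A : {set I}) m g :
  (\rank (span A) - \rank (span (KK A g)) <= m)%N ->
  (exists2 j, j \in A & vv j g != 0) ->
  exists g', compat A g' g /\ \rank (span (KK A g')) = (\rank (span A)).-1.
Proof.
elim: m g => [|m IH] g hm hne.
  have := rank_KK hne; lia.
have hlt := rank_KK hne.
case: (eqVneq (\rank (span (KK A g))) (\rank (span A)).-1) => hK.
  by exists g; split.
case: hne => j0 jA0 g0.
set S := (span (KK A g) + <<V j0>>)%MS.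
have rS : (\rank S <= \rank (span (KK A g)) + 1)%N.
  have [h _] := mxrank_adds_leqif (span (KK A g)) <<V j0>>%MS.
  apply: (leq_trans h); rewrite leq_add2l mxrank_gen; exact: rank_leq_row.
have [v1 v1A v1S] : exists2 v1, v1 \in A & ~~ (V v1 <= S)%MS.
  case: (boolP [exists j in A, ~~ (V j <= S)%MS]) => [/exists_inP [v1 ? ?]|hn].
    by exists v1.
  have : (span A <= S)%MS.
    apply/sumsmx_subP => j jA; rewrite genmxE.
    by move: hn; rewrite negb_exists_in => /forall_inP /(_ j jA) /negbNE.
  move/mxrankS; lia.
have [d [Sd d1]] := sep v1S.
have dS : forall j, (V j <= S)%MS -> vv j d = 0.
  by move=> j /submxP [x hx]; rewrite /vv hx -mulmxA Sd mulmx0 mxE.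
have dK : forall j, j \in KK A g -> vv j d = 0.
  move=> j jK; apply: dS; apply: submx_trans (V_span jK) _; exact: addsmxSl.
have dj0 : vv j0 d = 0.
  apply: dS; rewrite -(genmxE (V j0)); exact: addsmxSr.
have {}d1 : vv v1 d != 0 by [].
have g1 : vv v1 g != 0.
  apply/negP => /eqP h; move: v1S; rewrite (submx_trans (V_span (A := KK A g) _)) //.
    by rewrite inE v1A h eqxx.
  exact: addsmxSl.
have [d' [dd' hd']] : exists d', (forall j, vv j d = 0 -> vv j d' = 0) /\
    vv v1 g * vv v1 d' < 0.
  have : vv v1 g * vv v1 d != 0 by rewrite mulf_neq0.
  case: (ltrgtP (vv v1 g * vv v1 d) 0) => // h _.
    by exists d; split.
  exists (- d); split; first by move=> j hj; rewrite vvN hj oppr0.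
  by rewrite vvN mulrN oppr_lt0.
set P := [set j in A | vv j g * vv j d' < 0].
have v1P : v1 \in P by rewrite inE v1A hd'.
pose t j := `|vv j g| / `|vv j d'|.
case: (arg_minP t v1P) => js jsP hmin.
have : js \in P by []. rewrite inE => /andP [jsA hjs].
have hts : 0 < t js.
  rewrite /t divr_gt0 // normr_gt0.
    by apply: contraTneq hjs => ->; rewrite mul0r ltxx.
  by apply: contraTneq hjs => ->; rewrite mulr0 ltxx.
set g' := g + t js *: d'.
have vg' : forall j, vv j g' = vv j g + t js * vv j d' by move=> j; rewrite vvD vvZ.
have cmp : compat A g' g.
  have H : forall j, j \in A ->
      (0 < vv j g' -> 0 < vv j g) /\ (vv j g' < 0 -> vv j g < 0).
    move=> j jA; rewrite vg'; apply: step_sign => //.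
      by move=> h; apply: dd'; apply: dK; rewrite inE jA h eqxx.
    move=> hj; have jP : j \in P by rewrite inE jA hj.
    have := hmin j jP; rewrite /t ler_pdivlMr //.
      by rewrite normr_gt0; apply: contraTneq hj => ->; rewrite mulr0 ltxx.
  by split => j jA; have [] := H j jA.
have KK_sub' : KK A g \subset KK A g'.
  apply/subsetP => j; rewrite !inE => /andP [jA /eqP hj]; rewrite jA /= vg' hj.
  by rewrite dd' ?mulr0 ?addr0 //; apply: dK; rewrite inE jA hj eqxx.
have jsK' : js \in KK A g' by rewrite inE jsA vg' /t /= cross0 ?eqxx.
have jsK : ~~ (V js <= span (KK A g))%MS.
  apply/negP => h; move: hjs; rewrite (vv_span (@vanish_KK A g) h) mul0r ltxx.
  by [].
have hlt' : (\rank (span (KK A g)) < \rank (span (KK A g')))%N.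
  apply: rank_ltmx; rewrite ltmxE span_sub //=; apply/negP => h.
  by move: jsK; rewrite (submx_trans (V_span jsK') h).
have hne' : exists2 j, j \in A & vv j g' != 0.
  by exists j0 => //; rewrite vg' dd' // mulr0 addr0.
have hlt2 := rank_KK hne'.
have [g'' [cmp' hr]] := IH g' (natstep hm hlt') hne'.
exists g''; split => //.
case: cmp' => c1 c2; case: cmp => c3 c4; split.
  by move=> j jA h; apply: c3 => //; apply: c1.
by move=> j jA h; apply: c4 => //; apply: c2.
Qed.


Lemma flat_KK (A : {set I}) g : flat A (KK A g).
Proof.
move=> j jA jK; apply/negP => h; move: jK.
by rewrite inE jA (vv_span (@vanish_KK A g) h) eqxx.
Qed.

Lemma compat_sgz (A : {set I}) g' g j : compat A g' g -> j \in A -> vv j g' != 0 ->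
  sgz (vv j g') = sgz (vv j g).
Proof.
case=> c1 c2 jA hn; case: (ltrgtP (vv j g') 0) => h.
- by rewrite !ltr0_sgz // c2.
- by rewrite !gtr0_sgz // c1.
- by rewrite h eqxx in hn.
Qed.

Lemma absz_tri (a b : int) : (absz (a + b)%R <= absz a + absz b)%N.
Proof. lia. Qed.

Lemma hyper (A : {set I}) : (0 < \rank (span A))%N ->
  exists Y : {set I}, [/\ Y \subset A, flat A Y, \rank (span Y) = (\rank (span A)).-1 &
    (FF A set0 <= FF Y set0 + FF A Y)%N].
Proof.
move=> r0.
have [f [_ df]] := FF_ex A set0.
have wk : forall g, (exists2 j, j \in A & vv j g != 0) ->
    exists g', compat A g' g /\ \rank (span (KK A g')) = (\rank (span A)).-1.
  by move=> g hg; apply: (walk (m := \rank (span A))) => //; apply: leq_subr.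
case: (boolP [exists j in A, vv j f != 0]) => [/exists_inP [j jA fj] | hz].
  have [g' [cmp hr]] := wk f (ex_intro2 _ _ j jA fj).
  exists (KK A g'); split => //; [exact: KK_sub | exact: flat_KK |].
  set Y := KK A g'.
  have YA : Y \subset A by exact: KK_sub.
  rewrite -df disc_sig (sig_split f YA).
  apply: (leq_trans (absz_tri _ _)); apply: leq_add.
    by rewrite -disc_sig; apply: FF_ub => i; rewrite inE.
  have -> : sig (A :\: Y) f = sig A g'.
    rewrite (sig_split g' YA) (sig_vanish (@vanish_KK A g')) add0r.
    apply: esym; apply: sig_eq => i; rewrite !inE => /andP [iY iA].
    by apply: (compat_sgz cmp iA); move: iY; rewrite iA.
  by rewrite -disc_sig; apply: FF_ub; exact: vanish_KK.
have f0 : FF A set0 = 0%N.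
  rewrite -df disc_sig sig_vanish //.
  move=> i iA; apply/eqP; move: hz; rewrite negb_exists_in => /forall_inP /(_ i iA).
  exact: negbNE.
have [j jA jV] : exists2 j, j \in A & ~~ (V j <= (0 : 'M[R]_n))%MS.
  case: (boolP [exists j in A, ~~ (V j <= (0 : 'M[R]_n))%MS]) => [/exists_inP [j ? ?]|hn].
    by exists j.
  have : (span A <= (0 : 'M[R]_n))%MS.
    apply/sumsmx_subP => i iA; rewrite genmxE.
    by move: hn; rewrite negb_exists_in => /forall_inP /(_ i iA) /negbNE.
  by move/mxrankS; rewrite mxrank0 leqn0 => /eqP h; move: r0; rewrite h.
have [c [_ cj]] := sep jV.
have [g' [cmp hr]] := wk c (ex_intro2 _ _ j jA cj).
exists (KK A g'); split => //; [exact: KK_sub | exact: flat_KK |].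
by rewrite f0.
Qed.

Lemma nat4 (a b c d e f : nat) : (a <= b + c)%N -> b = (d + e)%N ->
  (e + c <= f)%N -> (d + f <= a)%N -> a = (d + f)%N.
Proof. lia. Qed.

Lemma nat3 (a b c : nat) : (a <= b + c)%N -> (b + c <= a)%N -> a = (b + c)%N.
Proof. lia. Qed.

Lemma claim k : forall (A : {set I}) s, \rank (span A) = (s + k.+1)%N ->
  exists W : {set I}, [/\ W \subset A, flat A W, \rank (span W) = s &
    FF A set0 = (FF W set0 + FF A W)%N].
Proof.
elim: k => [|k IH] A s hr.
  have [|Y [YA fY rY hY]] := hyper (A := A); first by rewrite hr addn1.
  exists Y; split => //; first by rewrite rY hr addn1.
  apply: nat3 hY (lower (sub0set Y) YA fY).
have [|Y [YA fY rY hY]] := hyper (A := A); first by rewrite hr addnS.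
have [|W [WY fW rW hW]] := IH Y s; first by rewrite rY hr addnS.
have WA : W \subset A by apply: subset_trans WY YA.
have fAW : flat A W.
  move=> j jA jW; case: (boolP (j \in Y)) => jY; first exact: fW.
  apply/negP => h; move: (fY j jA jY); rewrite (submx_trans h) //.
  exact: span_sub.
exists W; split => //.
exact: nat4 hY hW (lower WY YA fY) (lower (sub0set W) WA fAW).
Qed.

End Work.

Local Close Scope ring_scope.

Theorem mainTheorem13 (R : realType) (n : nat) (I : finType)
  (V : I -> 'rV[R]_n) (s : nat) :
  (1 <= s)%N -> (s <= (crank [set: I] V).-1)%N ->
  exists W : {set I},
    crank W V = s /\
    DD [set: I] V = (DD W V + DD (~: W) (quotmap W V))%N.
Proof.
move=> s1 sr.
have hr : \rank (span V [set: I]) = (s + (crank [set: I] V - s - 1).+1)%N.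
  rewrite /crank /span in sr *; lia.
have [W [_ _ rW hW]] := claim hr.
exists W; split; first exact: rW.
by rewrite DD_FF DD_FF quot_FF.
Qed.
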